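(* Let $k$ be a field, $\sigma$ an automorphism of $k$, and $\delta$ a $\sigma$-derivation of $k$. Then: (1) the skew series field $k((t,\sigma))$ is a regular extension of $k$; (2) the skew series field $k_{\sigma,\delta}((z))$ is a regular extension of $k$; (3) the skew rational fraction field $k(t,\sigma,\delta)$ is a regular extension of $k$.
   Context: Fields are not assumed commutative. An element $x$ of a field extension $h/k$ is algebraic over $k$ if the subfield $k(x)\subset h$ it generates has finite dimension both as a left and as a right $k$-vector space. A field extension $K/k$ is called regular if every element of $K$ algebraic over $k$ belongs to $k$. Consequently, if $k\subset L\subset K$ are fields and $K/k$ is regular, then $L/k$ is regular. The skew series field with right-hand coefficients $k_{\sigma,\delta}((z))$ consists of formal series $S=\sum_{i\ge n} z^i s_i$ ($n\in\mathbb{Z}$, $s_i\in k$), with left multiplication by $a\in k$ determined by $az=\sum_{i\ge 1} z^i\,\sigma\circ\delta^{i-1}(a)$. The skew series field $k((t,\sigma))$ consists of formal series $S=\sum_{i\ge n} s_i t^i$ ($n\in\mathbb{Z}$, $s_i\in k$) with $ta=\sigma(a)t$ for $a\in k$. $k(t,\sigma,\delta)$ denotes the skew field of fractions of the Ore polynomial ring $k[t,\sigma,\delta]$. There are $k$-embeddings $k(t,\sigma,\delta)\to k_{\sigma,\delta}((z))$, $t\mapsto z^{-1}$, and $k(t,\sigma)\to k((t,\sigma))$, $t\mapsto t$. *)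

(* Defs.v *)
(* Skew (noncommutative) fields are modelled as unitRingTypes
   in which every nonzero element is a unit. *)
From HB Require Import structures.
From mathcomp Require Import all_boot all_order all_algebra.
From Stdlib Require Import ClassicalEpsilon.
Set Implicit Arguments. Unset Strict Implicit. Unset Printing Implicit Defensive.
Import Order.TTheory GRing.Theory Num.Theory.
Local Open Scope ring_scope.

Section SkewSeries.
Variable k : unitRingType.

(* A (formal Laurent) series is given by its coefficient function int -> k;
   the series field is the set of functions with support bounded below. *)
Definition laurent (f : int -> k) : Prop :=
  exists n : int, forall i : int, i < n -> f i = 0.

(* some lower bound for the support (any valid bound gives the same products) *)
Definition lbound (f : int -> k) : int :=
  epsilon (inhabits (0 : int)) (fun n : int => forall i : int, i < n -> f i = 0).

Definition ls_const (a : k) : int -> k := fun i => if i == 0 then a else 0.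
Definition ls_zero : int -> k := fun _ => 0.
Definition ls_add (f g : int -> k) : int -> k := fun i => f i + g i.
Definition ls_opp (f : int -> k) : int -> k := fun i => - f i.

Definition sigz (s sinv : k -> k) (i : int) (a : k) : k :=
  if 0 <= i then iter (absz i) s a else iter (absz i) sinv a.

(* product in k((t,sigma)) : (sum s_i t^i)(sum r_j t^j) = sum s_i sigma^i(r_j) t^(i+j) *)
Definition tmul (s sinv : k -> k) (f g : int -> k) : int -> k := fun N =>
  let nf := lbound f in let ng := lbound g in let M := N - nf - ng in
  if 0 <= M then
    \sum_(d < (absz M).+1) f (nf + d%:Z) * sigz s sinv (nf + d%:Z) (g (N - nf - d%:Z))
  else 0.

(* Commutation coefficients in k_{sigma,delta}((z)):  a z^j = sum_m z^m c_{j,m}(a).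
   j >= 0 : from  a z = sum_(l>=1) z^l sigma(delta^(l-1) a)
   j < 0  : from  a z^-1 = z^-1 sigma^-1(a) - delta(sigma^-1 a). *)
Fixpoint cpos (s d : k -> k) (j : nat) (m : int) (a : k) : k :=
  match j with
  | 0 => if m == 0 then a else 0
  | j'.+1 => let L := m - j'%:Z in
     if 1 <= L then \sum_(l < absz L) s (iter l d (cpos s d j' (m - (l%:Z + 1)) a))
     else 0
  end.

Fixpoint cneg (s sinv d : k -> k) (n : nat) (m : int) (a : k) : k :=
  match n with
  | 0 => if m == 0 then a else 0
  | n'.+1 => sinv (cneg s sinv d n' (m + 1) a) - d (sinv (cneg s sinv d n' m a))
  end.

Definition czc (s sinv d : k -> k) (j m : int) (a : k) : k :=
  match j with
  | Posz n => cpos s d n m a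
  | Negz n => cneg s sinv d n.+1 m a
  end.

(* product in k_{sigma,delta}((z)) (right-hand coefficients):
   (sum z^i s_i)(sum z^j r_j) = sum_{i,j,m} z^(i+m) c_{j,m}(s_i) r_j *)
Definition zmul (s sinv d : k -> k) (f g : int -> k) : int -> k := fun N =>
  let nf := lbound f in let ng := lbound g in let M := N - nf - ng in
  if 0 <= M then
    \sum_(d1 < (absz M).+1) \sum_(d2 < (absz M - d1)%N.+1)
       czc s sinv d (ng + d2%:Z) (N - nf - d1%:Z) (f (nf + d1%:Z)) * g (ng + d2%:Z)
  else 0.

(* the element z^-1 (image of t) *)
Definition zinv : int -> k := fun i => if i == -1 then 1 else 0.

Section Generic.
Variable mul : (int -> k) -> (int -> k) -> (int -> k).

Definition divring_closed (S : (int -> k) -> Prop) : Prop :=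
  [/\ forall u v, S u -> S v -> S (ls_add u v),
      forall u, S u -> S (ls_opp u),
      forall u v, S u -> S v -> S (mul u v) &
      forall u w, S u -> laurent w -> mul u w = ls_const 1 -> mul w u = ls_const 1 -> S w].

Definition gen (G : (int -> k) -> Prop) (y : int -> k) : Prop :=
  forall S, divring_closed S -> (forall a, S (ls_const a)) -> (forall g, G g -> S g) -> S y.

Definition lsum (l : seq (int -> k)) : int -> k := foldr ls_add ls_zero l.

(* x algebraic over k: k(x) finite-dimensional as left and as right k-space *)
Definition algebraic_over_k (x : int -> k) : Prop :=
  let kx := gen (fun g => g = x) in
  (exists bs : seq (int -> k), (forall b, List.In b bs -> kx b) /\
     forall y, kx y -> exists cs : seq k, size cs = size bs /\
       y = lsum [seq mul (ls_const c.1) c.2 | c <- zip cs bs]) /\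
  (exists bs : seq (int -> k), (forall b, List.In b bs -> kx b) /\
     forall y, kx y -> exists cs : seq k, size cs = size bs /\
       y = lsum [seq mul c.2 (ls_const c.1) | c <- zip cs bs]).

Definition regular_over_k (C : (int -> k) -> Prop) : Prop :=
  forall x, C x -> algebraic_over_k x -> exists a : k, x = ls_const a.
End Generic.
End SkewSeries.

(* Main.v *)
Require Import Defs.
From HB Require Import structures.
From mathcomp Require Import all_boot all_order all_algebra zify.
From Stdlib Require Import ClassicalEpsilon Classical FunctionalExtensionality.
Set Implicit Arguments. Unset Strict Implicit. Unset Printing Implicit Defensive.
Import Order.TTheory GRing.Theory Num.Theory.
Local Open Scope ring_scope.

Section Basics.
Variable k : unitRingType.
Hypothesis hk : forall x : k, x != 0 -> x \is a GRing.unit.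

Lemma mulf_neq0' (a b : k) : a != 0 -> b != 0 -> a * b != 0.
Proof.
move=> ha hb; apply/eqP => e; move/eqP: hb; apply.
by rewrite -(mulKr (hk ha) b) e mulr0.
Qed.

Lemma sum_single (n : nat) (F : 'I_n -> k) (j : nat) (hj : (j < n)%N) :
  (forall i : 'I_n, nat_of_ord i <> j -> F i = 0) -> \sum_(i < n) F i = F (Ordinal hj).
Proof.
move=> H; rewrite (bigD1 (Ordinal hj)) //= big1 ?addr0 // => i /eqP hne; apply: H.
move=> e; apply: hne; exact: val_inj.
Qed.

Definition isval (u : int -> k) (p : int) := u p <> 0 /\ forall i, i < p -> u i = 0.

Lemma lbound_spec (f : int -> k) : laurent f -> forall i, i < lbound f -> f i = 0.
Proof.
move=> [n hn]; rewrite /lbound.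
exact: (epsilon_spec (inhabits (0:int)) (fun n : int => forall i : int, i < n -> f i = 0) (ex_intro _ n hn)).
Qed.

Lemma isval_laurent f p : isval f p -> laurent f.
Proof. by move=> [_ h]; exists p. Qed.

Lemma lbound_le f p : isval f p -> lbound f <= p.
Proof.
move=> hv; have hl := isval_laurent hv; case: hv => h0 _.
rewrite leNgt; apply/negP => hlt; exact: h0 (lbound_spec hl hlt).
Qed.

Lemma laurent_cases f : laurent f -> (forall i, f i = 0) \/ exists p, isval f p.
Proof.
move=> [n hn].
case: (classic (exists i, f i <> 0)) => [[i hi]|hno]; last first.
  by left => i; apply: NNPP => h; apply: hno; exists i.
right.
(* minimal index: search from n upward *)
have : forall m : nat, (exists j : nat, (j <= m)%N /\ f (n + j%:Z) <> 0) ->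
   exists p, isval f p.
  elim=> [|m IH] [j [hj hf]].
    exists n; split; first by move: hj; rewrite leqn0 => /eqP e; move: hf; rewrite e addr0.
    exact: hn.
  case: (classic (exists j0 : nat, (j0 <= m)%N /\ f (n + j0%:Z) <> 0)) => [h|h]; first exact: IH.
  exists (n + j%:Z); split => // i0 hi0.
  case: (boolP (i0 < n)) => [|hin]; first exact: hn.
  apply: NNPP => hfi; apply: h; exists (absz (i0 - n)); split; first by lia.
  by have -> : n + (absz (i0 - n))%:Z = i0 by lia.
apply; exists (absz (i - n)); split => //.
have hin : n <= i by rewrite leNgt; apply/negP => h; exact: hi (hn _ h).
by have -> : n + (absz (i - n))%:Z = i by lia.
Qed.

End Basics.

Section Coefs.
Variable k : unitRingType.
Variable s : {rmorphism k -> k}.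
Variable sinv : k -> k.
Hypothesis hs1 : cancel s sinv.
Hypothesis hs2 : cancel sinv s.
Variable d : k -> k.
Hypothesis hdD : forall a b : k, d (a + b) = d a + d b.

Lemma sinv0 : sinv 0 = 0.
Proof. by have := hs1 0; rewrite rmorph0. Qed.

Lemma d0 : d 0 = 0.
Proof. have := hdD 0 0; rewrite addr0 => /(congr1 (fun x => x - d 0)); by rewrite subrr addrK. Qed.

Lemma iter0 (f : k -> k) n : f 0 = 0 -> iter n f 0 = 0.
Proof. by move=> h; elim: n => //= n ->. Qed.

Lemma iter_neq0 (f : k -> k) n a : (forall x, f x = 0 -> x = 0) -> a != 0 -> iter n f a != 0.
Proof. move=> h ha; elim: n => //= n IH; apply/eqP => /h /eqP; exact/negP. Qed.

Lemma sigz0 i : sigz s sinv i 0 = 0.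
Proof. by rewrite /sigz; case: ifP => _; apply: iter0; rewrite ?rmorph0 ?sinv0. Qed.

Lemma sigz_neq0 i a : a != 0 -> sigz s sinv i a != 0.
Proof.
rewrite /sigz => ha; case: ifP => _; apply: iter_neq0 => // x hx.
  by rewrite -(hs1 x) hx sinv0.
by rewrite -(hs2 x) hx rmorph0.
Qed.

Lemma cpos0 n m : cpos s d n m 0 = 0.
Proof.
elim: n m => [|n IH] m /=; first by case: ifP.
case: ifP => // _; apply: big1 => l _; by rewrite IH iter0 ?d0 // rmorph0.
Qed.

Lemma cneg0 n m : cneg s sinv d n m 0 = 0.
Proof.
elim: n m => [|n IH] m /=; first by case: ifP.
by rewrite !IH sinv0 d0 subr0.
Qed.

Lemma czc0 j m : czc s sinv d j m 0 = 0.
Proof. by case: j => n; rewrite /czc ?cpos0 ?cneg0. Qed.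

Lemma cpos_low n m a : m < n%:Z -> cpos s d n m a = 0.
Proof.
case: n => [|n] /= h; first by rewrite ifF //; apply/negbTE; lia.
by rewrite ifF //; apply/negbTE; lia.
Qed.

Lemma cpos_diag n a : cpos s d n n%:Z a = iter n s a.
Proof.
elim: n => [|n IH] /=; first by rewrite /= ?oppr0 ?eqxx.
rewrite ifT; last by lia.
rewrite (_ : absz _ = 1%N); last by lia.
rewrite big_ord1 /= -IH; congr (s (cpos s d n _ a)); lia.
Qed.

Lemma cneg_low n m a : m < - n%:Z -> cneg s sinv d n m a = 0.
Proof.
elim: n m => [|n IH] m h /=; first by rewrite ifF //; apply/negbTE; lia.
by rewrite !IH ?sinv0 ?d0 ?subr0 //; lia.
Qed.

Lemma cneg_diag n a : cneg s sinv d n (- n%:Z) a = iter n sinv a.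
Proof.
elim: n => [|n IH] /=; first by rewrite /= ?oppr0 ?eqxx.
rewrite (cneg_low (m := - n.+1%:Z)); last by lia.
rewrite sinv0 d0 subr0 -IH; congr (sinv (cneg s sinv d n _ a)); lia.
Qed.

Lemma czc_low j m a : m < j -> czc s sinv d j m a = 0.
Proof.
case: j => n h; rewrite /czc; first exact: cpos_low.
apply: cneg_low; move: h; rewrite NegzE; lia.
Qed.

Lemma czc_diag j a : czc s sinv d j j a = sigz s sinv j a.
Proof.
case: j => n; rewrite /czc; first by rewrite cpos_diag /sigz.
have -> : Negz n = - (n.+1)%:Z by rewrite NegzE.
rewrite cneg_diag /sigz; have -> : (0 <= - (n.+1)%:Z) = false by lia.
by have -> : absz (- (n.+1)%:Z) = n.+1 by lia.
Qed.

End Coefs.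

Section TMul.
Variable k : unitRingType.
Hypothesis hk : forall x : k, x != 0 -> x \is a GRing.unit.
Variable s : {rmorphism k -> k}.
Variable sinv : k -> k.
Hypothesis hs1 : cancel s sinv.
Hypothesis hs2 : cancel sinv s.

Lemma tmul_isval f g p q : isval f p -> isval g q -> isval (tmul s sinv f g) (p + q).
Proof.
move=> hf hg; have lf := lbound_le hf; have lg := lbound_le hg.
case: hf => hf0 hf1; case: hg => hg0 hg1.
rewrite /tmul /=.
set nf := lbound f in lf *; set ng := lbound g in lg *.
have term : forall (N : int) (dd : nat), (nf + dd%:Z < p) \/ (N - nf - dd%:Z < q) ->
  f (nf + dd%:Z) * sigz s sinv (nf + dd%:Z) (g (N - nf - dd%:Z)) = 0.
  move=> N dd [h|h]; first by rewrite hf1 // mul0r.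
  by rewrite hg1 // sigz0 // mulr0.
split.
  rewrite ifT; last by lia.
  have hj : (absz (p - nf)%R < (absz (p+q-nf-ng)%R).+1)%N by lia.
  rewrite (sum_single hj).
    have -> : nf + (absz (p - nf))%:Z = p by lia.
    have -> : p + q - nf - (absz (p - nf))%:Z = q by lia.
    apply/eqP; apply: mulf_neq0' => //; first exact/eqP.
    by apply: sigz_neq0 => //; exact/eqP.
  by move=> i hi; apply: term; lia.
move=> N hN; case: ifP => // _; apply: big1 => i _; apply: term; lia.
Qed.

Lemma tmul_zero_l f g : (forall i, f i = 0) -> forall N, tmul s sinv f g N = 0.
Proof.
move=> h N; rewrite /tmul /=; case: ifP => // _; apply: big1 => i _; by rewrite h mul0r.
Qed.

Lemma tmul_zero_r f g : (forall i, g i = 0) -> forall N, tmul s sinv f g N = 0.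
Proof.
move=> h N; rewrite /tmul /=; case: ifP => // _; apply: big1 => i _; by rewrite h sigz0 // mulr0.
Qed.

Lemma tmul_laurent f g : laurent f -> laurent g -> laurent (tmul s sinv f g).
Proof.
move=> lf lg.
case: (laurent_cases lf) => [h|[p hp]]; first by exists 0 => i _; exact: tmul_zero_l.
case: (laurent_cases lg) => [h|[q hq]]; first by exists 0 => i _; exact: tmul_zero_r.
exact: isval_laurent (tmul_isval hp hq).
Qed.

Lemma tmul_constl c b : laurent b -> forall N, tmul s sinv (ls_const c) b N = c * b N.
Proof.
move=> lb N.
have [->|hc] := eqVneq c 0.
  rewrite mul0r; apply: tmul_zero_l => i; by rewrite /ls_const; case: ifP.
have hv : isval (ls_const c) 0.
  split; first by rewrite /ls_const eqxx; exact/eqP.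
  by move=> i hi; rewrite /ls_const ifF //; apply/negbTE; lia.
have l0 := lbound_le hv.
have hb := lbound_spec lb.
rewrite /tmul /=.
set n0 := lbound (ls_const c) in l0 *; set nb := lbound b in hb *.
have term : forall dd : nat, dd != absz (- n0) ->
  ls_const c (n0 + dd%:Z) * sigz s sinv (n0 + dd%:Z) (b (N - n0 - dd%:Z)) = 0.
  by move=> dd hd; rewrite /ls_const ifF ?mul0r //; apply/negbTE; lia.
case: ifP => hM.
  case: (boolP (absz (- n0)%R < (absz (N - n0 - nb)%R).+1)%N) => hj.
    rewrite (sum_single (j := absz (- n0)) hj); last by move=> i hi; apply: term; apply/eqP.
    have -> : n0 + (absz (- n0))%:Z = 0 by lia.
    have -> : N - n0 - (absz (- n0))%:Z = N by lia.
    by rewrite /ls_const eqxx /sigz /=.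
  rewrite big1; last by move=> i _; apply: term; apply/eqP => e; move: hj; rewrite -e ltn_ord.
  by rewrite hb ?mulr0 //; lia.
by rewrite hb ?mulr0 //; lia.
Qed.

End TMul.

Section ZMul.
Variable k : unitRingType.
Hypothesis hk : forall x : k, x != 0 -> x \is a GRing.unit.
Variable s : {rmorphism k -> k}.
Variable sinv : k -> k.
Hypothesis hs1 : cancel s sinv.
Hypothesis hs2 : cancel sinv s.
Variable d : k -> k.
Hypothesis hdD : forall a b : k, d (a + b) = d a + d b.

Lemma zmul_isval f g p q : isval f p -> isval g q -> isval (zmul s sinv d f g) (p + q).
Proof.
move=> hf hg; have lf := lbound_le hf; have lg := lbound_le hg.
case: hf => hf0 hf1; case: hg => hg0 hg1.
rewrite /zmul /=.
set nf := lbound f in lf *; set ng := lbound g in lg *.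
have term : forall (N : int) (d1 d2 : nat),
  (nf + d1%:Z < p) \/ (ng + d2%:Z < q) \/ (N - nf - d1%:Z < ng + d2%:Z) ->
  czc s sinv d (ng + d2%:Z) (N - nf - d1%:Z) (f (nf + d1%:Z)) * g (ng + d2%:Z) = 0.
  move=> N d1 d2 [h|[h|h]]; first by rewrite hf1 // czc0 // mul0r.
    by rewrite hg1 // mulr0.
  by rewrite czc_low // mul0r.
split.
  rewrite ifT; last by lia.
  have hj1 : (absz (p - nf)%R < (absz (p+q-nf-ng)%R).+1)%N by lia.
  rewrite (sum_single hj1); last first.
    move=> i hi; apply: big1 => j _; apply: term; lia.
  have hj2 : (absz (q - ng)%R < (absz (p+q-nf-ng)%R - absz (p - nf)%R).+1)%N by lia.
  rewrite /= (sum_single hj2); last first.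
    move=> j hj; apply: term; lia.
  rewrite /=.
  have -> : nf + (absz (p - nf))%:Z = p by lia.
  have -> : ng + (absz (q - ng))%:Z = q by lia.
  have -> : p + q - nf - (absz (p - nf))%:Z = q by lia.
  rewrite czc_diag //.
  apply/eqP; apply: mulf_neq0' => //; last exact/eqP.
  by apply: sigz_neq0 => //; exact/eqP.
move=> N hN; case: ifP => // _; apply: big1 => i _; apply: big1 => j _; apply: term; lia.
Qed.

Lemma zmul_zero_l f g : (forall i, f i = 0) -> forall N, zmul s sinv d f g N = 0.
Proof.
move=> h N; rewrite /zmul /=; case: ifP => // _; apply: big1 => i _; apply: big1 => j _.
by rewrite h czc0 // mul0r.
Qed.

Lemma zmul_zero_r f g : (forall i, g i = 0) -> forall N, zmul s sinv d f g N = 0.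
Proof.
move=> h N; rewrite /zmul /=; case: ifP => // _; apply: big1 => i _; apply: big1 => j _.
by rewrite h mulr0.
Qed.

Lemma zmul_laurent f g : laurent f -> laurent g -> laurent (zmul s sinv d f g).
Proof.
move=> lf lg.
case: (laurent_cases lf) => [h|[p hp]]; first by exists 0 => i _; exact: zmul_zero_l.
case: (laurent_cases lg) => [h|[q hq]]; first by exists 0 => i _; exact: zmul_zero_r.
exact: isval_laurent (zmul_isval hp hq).
Qed.

Lemma zmul_constr c f : laurent f -> forall N, zmul s sinv d f (ls_const c) N = f N * c.
Proof.
move=> lf N.
have [->|hc] := eqVneq c 0.
  rewrite mulr0; apply: zmul_zero_r => i; by rewrite /ls_const; case: ifP.
have hv : isval (ls_const c) 0.
  split; first by rewrite /ls_const eqxx; exact/eqP.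
  by move=> i hi; rewrite /ls_const ifF //; apply/negbTE; lia.
have l0 := lbound_le hv.
have hf := lbound_spec lf.
rewrite /zmul /=.
set nf := lbound f in hf *; set ng := lbound (ls_const c) in l0 *.
have term : forall (d1 d2 : nat), (ng + d2%:Z != 0) \/ (N - nf - d1%:Z != 0) ->
  czc s sinv d (ng + d2%:Z) (N - nf - d1%:Z) (f (nf + d1%:Z)) * ls_const c (ng + d2%:Z) = 0.
  move=> d1 d2 [h|h]; first by rewrite /ls_const (negbTE h) mulr0.
  case: (eqVneq (ng + d2%:Z) 0) => e; last by rewrite /ls_const (negbTE e) mulr0.
  by rewrite e /= (negbTE h) mul0r.
case: ifP => hM; last by rewrite hf ?mul0r //; lia.
case: (boolP (nf <= N)) => hN; last first.
  rewrite hf ?mul0r; last by lia.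
  apply: big1 => i _; apply: big1 => j _; apply: term; right; apply/eqP; lia.
have hj1 : (absz (N - nf)%R < (absz (N-nf-ng)%R).+1)%N by lia.
rewrite (sum_single hj1); last first.
  move=> i hi; apply: big1 => j _; apply: term; right; apply/eqP; lia.
have hj2 : (absz (- ng)%R < (absz (N-nf-ng)%R - absz (N - nf)%R).+1)%N by lia.
rewrite /= (sum_single hj2); last first.
  move=> j hj; apply: term; left; apply/eqP; lia.
rewrite /=.
have -> : ng + (absz (- ng))%:Z = 0 by lia.
have -> : nf + (absz (N - nf))%:Z = N by lia.
have -> : N - nf - (absz (N - nf))%:Z = 0 by lia.
by rewrite /ls_const /=.
Qed.

End ZMul.

Section Lin.
Variable k : unitRingType.
Hypothesis hk : forall x : k, x != 0 -> x \is a GRing.unit.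
Variable lf : bool.

Definition sc (c x : k) := if lf then c * x else x * c.

Lemma sc0r c : sc c 0 = 0.  Proof. by rewrite /sc; case: lf; rewrite ?mulr0 ?mul0r. Qed.
Lemma sc0l x : sc 0 x = 0.  Proof. by rewrite /sc; case: lf; rewrite ?mulr0 ?mul0r. Qed.
Lemma scD c x y : sc c (x + y) = sc c x + sc c y.
Proof. by rewrite /sc; case: lf; rewrite ?mulrDr ?mulrDl. Qed.
Lemma scN c x : sc c (- x) = - sc c x.
Proof. by rewrite /sc; case: lf; rewrite ?mulrN ?mulNr. Qed.
Lemma sc_comb c a c' : exists e, forall x, sc c x - sc a (sc c' x) = sc e x.
Proof.
rewrite /sc; case: lf.
  by exists (c - a * c') => x; rewrite mulrBl mulrA.
by exists (c - c' * a) => x; rewrite mulrBr mulrA.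
Qed.
Lemma sc_factor c c' : c != 0 -> c' != 0 -> exists2 a, a != 0 & forall x, sc c' x = sc a (sc c x).
Proof.
move=> hc hc'; have uc := hk hc.
have hci : c^-1 != 0 by rewrite invr_eq0.
rewrite /sc; case: lf.
  exists (c' * c^-1); first exact: mulf_neq0'.
  by move=> x; rewrite mulrA mulrVK.
exists (c^-1 * c'); first exact: mulf_neq0'.
by move=> x; rewrite mulrA mulrK.
Qed.
Lemma sc_neq0 a x : a != 0 -> x != 0 -> sc a x != 0.
Proof. by move=> ha hx; rewrite /sc; case: lf; apply: mulf_neq0'. Qed.

Fixpoint V (bs : seq (int -> k)) (u : int -> k) : Prop :=
  match bs with
  | [::] => forall N, u N = 0
  | b :: bs' => exists c w, V bs' w /\ forall N, u N = sc c (b N) + w N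
  end.

Lemma V_ext bs u u' : V bs u -> (forall N, u N = u' N) -> V bs u'.
Proof.
case: bs => [|b bs] /= h e; first by move=> N; rewrite -e h.
case: h => c [w [hw hu]]; exists c, w; split => // N; by rewrite -e hu.
Qed.

Lemma V_comb bs u w a : V bs u -> V bs w -> V bs (fun N => u N - sc a (w N)).
Proof.
elim: bs u w => [|b bs IH] u w /=; first by move=> hu hw N; rewrite hu hw sc0r subr0.
move=> [c [u' [hu' eu]]] [c' [w' [hw' ew]]].
have [e he] := sc_comb c a c'.
exists e, (fun N => u' N - sc a (w' N)); split; first exact: IH.
move=> N; rewrite eu ew scD -he.
rewrite opprD !addrA; congr (_ + _); rewrite -!addrA; congr (_ + _); by rewrite addrC.
Qed.

Lemma isval_sc a u p : a != 0 -> isval u p -> @isval k (fun N => sc a (u N)) p.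
Proof.
move=> ha [h0 h1]; split; last by move=> i hi; rewrite h1 // sc0r.
by apply/eqP; apply: sc_neq0 => //; exact/eqP.
Qed.

Lemma isval_sub1 u w p q : isval u p -> isval w q -> p < q -> @isval k (fun N => u N - w N) p.
Proof.
move=> [u0 u1] [w0 w1] h; split; first by rewrite (w1 p h) subr0.
by move=> i hi; rewrite u1 // w1 ?subr0 //; lia.
Qed.

Lemma isval_sub2 u w p q : isval u p -> isval w q -> q < p -> @isval k (fun N => u N - w N) q.
Proof.
move=> [u0 u1] [w0 w1] h; split; first by rewrite (u1 q h) sub0r; move/eqP; rewrite oppr_eq0 => /eqP; exact: w0.
by move=> i hi; rewrite w1 // u1 ?subr0 //; lia.
Qed.

Lemma V_vals bs : exists vs : seq int, (size vs <= size bs)%N /\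
  forall u p, V bs u -> isval u p -> p \in vs.
Proof.
elim: bs => [|b bs [vs [hs hv]]].
  by exists [::]; split => // u p /= hu [h0 _]; case: h0; rewrite hu.
case: (classic (exists u p, V (b :: bs) u /\ isval u p /\ p \notin vs)); last first.
  move=> hno; exists vs; split; first by apply: leq_trans hs _.
  move=> u p hu hp; apply: NNPP => hn; apply: hno; exists u, p; split => //; split => //.
  exact/negP.
move=> [u1 [p1 [[c1 [w1 [hw1 e1]]] [hp1 hn1]]]].
have hc1 : c1 != 0.
  apply/eqP => e; move/negP: hn1; apply; apply: hv hp1; apply: (V_ext (u:=w1) (u':=u1) hw1) => N.
  by rewrite e1 e sc0l add0r.
exists (p1 :: vs); split => //.
move=> u p [c [w [hw e]]] hp.
rewrite in_cons; case: (eqVneq p p1) => //= hpp.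
have [ec|hc] := eqVneq c 0.
  rewrite ec in e; apply: hv hp; apply: (V_ext (u:=w) (u':=u) hw) => N; by rewrite e sc0l add0r.
have [a ha hfac] := sc_factor hc1 hc.
have hz : V bs (fun N => w N - sc a (w1 N)) by apply: (V_comb (u:=w) (w:=w1)).
have ez : forall N, w N - sc a (w1 N) = u N - sc a (u1 N).
  move=> N; rewrite e e1 scD hfac opprD !addrA; congr (_ + _).
  by rewrite addrC addrA addNr add0r.
have hz' := V_ext (u:=(fun N => w N - sc a (w1 N))) (u':=(fun N => u N - sc a (u1 N))) hz ez.
have hap := isval_sc ha hp1.
case: (ltgtP p p1) => h.
- exact: hv hz' (isval_sub1 hp hap h).
- by move/negP: hn1; case; exact: hv hz' (isval_sub2 hp hap h).
- by move/eqP: hpp; rewrite h.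
Qed.

End Lin.

Section Main.
Variable k : unitRingType.
Hypothesis hk : forall x : k, x != 0 -> x \is a GRing.unit.
Variable mul : (int -> k) -> (int -> k) -> (int -> k).
Hypothesis hmulv : forall f g p q, isval f p -> isval g q -> isval (mul f g) (p + q).
Hypothesis hmull : forall f g, laurent f -> laurent g -> laurent (mul f g).

Lemma isval_const1 : isval (ls_const (1 : k)) 0.
Proof.
split; first by rewrite /ls_const eqxx; exact/eqP/oner_neq0.
by move=> i hi; rewrite /ls_const ifF //; apply/negbTE; lia.
Qed.

Lemma laurent_closed : Defs.divring_closed mul (@laurent k).
Proof.
split.
- move=> u v [n hn] [m hm]; exists (Order.min n m) => i hi.
  by rewrite /ls_add hn ?hm ?addr0 //; lia.
- by move=> u [n hn]; exists n => i hi; rewrite /ls_opp hn ?oppr0.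
- exact: hmull.
- by [].
Qed.

Lemma laurent_const (a : k) : laurent (ls_const a).
Proof. by exists 0 => i hi; rewrite /ls_const ifF //; apply/negbTE; lia. Qed.

Lemma gen_closed G : Defs.divring_closed mul (gen mul G).
Proof.
split.
- move=> u v hu hv S hS hc hG; have [h1 _ _ _] := hS; apply: h1; [exact: hu | exact: hv].
- move=> u hu S hS hc hG; have [_ h2 _ _] := hS; apply: h2; exact: hu.
- move=> u v hu hv S hS hc hG; have [_ _ h3 _] := hS; apply: h3; [exact: hu | exact: hv].
- move=> u w hu lw e1 e2 S hS hc hG; have [_ _ _ h4] := hS; apply: (h4 u) => //; exact: hu.
Qed.

Lemma gen_laurent G y : (forall g, G g -> laurent g) -> gen mul G y -> laurent y.
Proof. move=> hG hy; apply: hy => //; [exact: laurent_closed | exact: laurent_const]. Qed.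

Variable lf : bool.
Variable op : k -> (int -> k) -> (int -> k).
Hypothesis hop : forall c b, laurent b -> forall N, op c b N = sc lf c (b N).

Lemma lsum_V bs cs : size cs = size bs -> (forall b, List.In b bs -> laurent b) ->
  V lf bs (lsum [seq op c.1 c.2 | c <- zip cs bs]).
Proof.
elim: bs cs => [|b bs IH] [|c cs] //= hs hl; try by move=> N.
exists c, (lsum [seq op c.1 c.2 | c <- zip cs bs]); split.
  apply: IH; first by case: hs.
  by move=> b' hb'; apply: hl; right.
by move=> N; rewrite /ls_add hop //; apply: hl; left.
Qed.

Lemma regular_generic x : laurent x ->
  (exists bs : seq (int -> k), (forall b, List.In b bs -> gen mul (fun g => g = x) b) /\
     forall y, gen mul (fun g => g = x) y -> exists cs : seq k, size cs = size bs /\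
       y = lsum [seq op c.1 c.2 | c <- zip cs bs]) ->
  exists a : k, x = ls_const a.
Proof.
move=> lx [bs [hbs hspan]].
set kx := gen mul (fun g => g = x).
have kxc := gen_closed (fun g => g = x).
have kxl : forall y, kx y -> laurent y by move=> y; apply: gen_laurent => g ->.
have kxk : forall a, kx (ls_const a) by move=> a S _ hc _.
have kxx : kx x by move=> S _ _ hG; apply: hG.
have [kadd kopp kmul _] := kxc.
set y := ls_add x (ls_opp (ls_const (x 0))).
have ky : kx y by apply: kadd => //; apply: kopp.
case: (classic (forall i, y i = 0)) => [hy|hy].
  exists (x 0); apply: functional_extensionality => i; apply/eqP; rewrite -subr_eq0.
  by apply/eqP; have := hy i.
have ly := kxl _ ky.
case: (laurent_cases ly) => [h|[m hm]]; first by case: hy.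
have m0 : m != 0.
  apply/eqP => e; case: hm => h0 _; apply: h0; rewrite e /y /ls_add /ls_opp /ls_const eqxx.
  by rewrite subrr.
pose pw := fix pw (n : nat) := if n is n'.+1 then mul (pw n') y else ls_const 1.
have kpw : forall n, kx (pw n) by elim=> [|n IH] //=; apply: kmul.
have vpw : forall n : nat, isval (pw n) (n%:Z * m).
  elim=> [|n IH] /=; first by rewrite mul0r; exact: isval_const1.
  have -> : (n.+1)%:Z * m = n%:Z * m + m by rewrite intS mulrDl mul1r addrC.
  exact: hmulv.
have [vs [hsz hvs]] := V_vals hk lf bs.
have inV : forall n, V lf bs (pw n).
  move=> n; have [cs [hcs ->]] := hspan _ (kpw n).
  by apply: lsum_V => // b hb; apply: kxl; apply: hbs.
have hsub : {subset [seq (i%:Z * m) | i <- iota 0 (size bs).+1] <= vs}.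
  move=> z /mapP [i _ ->]; exact: hvs (inV i) (vpw i).
have huniq : uniq [seq (i%:Z * m) | i <- iota 0 (size bs).+1].
  rewrite map_inj_uniq ?iota_uniq // => i j /(mulIf m0) /eqP; rewrite eqz_nat => /eqP.
  done.
have := uniq_leq_size huniq hsub; rewrite size_map size_iota => h.
by move: (leq_trans h hsz); rewrite ltnn.
Qed.

End Main.

Theorem proposition2 (k : unitRingType)
  (hk : forall x : k, x != 0 -> x \is a GRing.unit)
  (s : {rmorphism k -> k}) (sinv : k -> k)
  (hs1 : cancel s sinv) (hs2 : cancel sinv s)
  (d : k -> k)
  (hdD : forall a b : k, d (a + b) = d a + d b)
  (hdM : forall a b : k, d (a * b) = s a * d b + d a * b) :
  [/\ regular_over_k (tmul s sinv) (@laurent k),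
      regular_over_k (zmul s sinv d) (@laurent k) &
      regular_over_k (zmul s sinv d) (gen (zmul s sinv d) (fun g => g = zinv k))].
Proof.
have P2 : regular_over_k (zmul s sinv d) (@laurent k).
  move=> x lx [_ h2].
  apply: (@regular_generic k hk (zmul s sinv d) _ _ false (fun c b => zmul s sinv d b (ls_const c))) => //.
  - by move=> f g p q; apply: zmul_isval.
  - by move=> f g; apply: zmul_laurent.
  - by move=> c b lb N; rewrite zmul_constr.
split => //.
- move=> x lx [h1 _].
  apply: (@regular_generic k hk (tmul s sinv) _ _ true (fun c b => tmul s sinv (ls_const c) b)) => //.
  - by move=> f g p q; apply: tmul_isval.
  - by move=> f g; apply: tmul_laurent.
  - by move=> c b lb N; rewrite tmul_constl.
- move=> x hx; apply: P2.
  apply: (gen_laurent (mul := zmul s sinv d)) hx.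
  - by move=> f g; apply: zmul_laurent.
  - move=> g ->; exists (-1) => i hi; rewrite /zinv ifF //; apply/negbTE; lia.
Qed.
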